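(* Let $\beta\in\mathbb C$ and $m\ge0$. If $\beta$ is reproducible of order $m$ in $\mathcal H$, then $\beta$ is reproducible of order $j$ for every integer $0\le j\le m$.
   Context: Standing assumptions: $\Omega\subset\mathbb C$ is a domain with $0\in\Omega$, and $\mathcal H$ is a Hilbert space of analytic functions on $\Omega$ in which every point evaluation at points of $\Omega$ is bounded; the shift $(Sf)(z)=zf(z)$ is bounded on $\mathcal H$; and the polynomials $\mathcal P$ are dense in $\mathcal H$. A point $\beta\in\mathbb C$ (not necessarily in $\Omega$) is reproducible of order $m\ge0$ in $\mathcal H$ if the linear functional $p\mapsto p^{(m)}(\beta)$ on $\mathcal P$ extends to a bounded linear functional on $\mathcal H$. *)

(* Defs.v *)
(* The complex numbers are R[i]
   (mathcomp-real-closed `complex`) for an arbitrary R : realType;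
   R[i]^o is R[i] seen as a normed module (hence topological space) over
   itself, so `derivable f z 1` is complex differentiability. *)
From HB Require Import structures.
From mathcomp Require Import all_boot all_order all_algebra.
From mathcomp Require Import complex.
From mathcomp Require Import all_classical all_reals all_analysis.
Import Order.TTheory GRing.Theory Num.Theory.
Import numFieldNormedType.Exports.

Set Implicit Arguments.
Unset Strict Implicit.
Unset Printing Implicit Defensive.

Local Open Scope ring_scope.
Local Open Scope classical_set_scope.

Definition is_domain (R : realType) (Omega : set R[i]^o) : Prop :=
  [/\ open Omega, connected Omega & Omega !=set0].

(* Together with completeness of V this makes V a complex Hilbert space. *)
Definition is_inner_product (R : realType) (V : normedModType R[i])
  (ip : V -> V -> R[i]) : Prop :=
  [/\ (forall u v w, ip (u + v) w = ip u w + ip v w),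
      (forall (a : R[i]) u v, ip (a *: u) v = a * ip u v),
      (forall u v, ip v u = (ip u v)^*)
    & (forall u, (`|u| : R[i]) ^+ 2 = ip u u)].

(* The Hilbert space H is modelled by a complete
   normed space V with inner product ip, together with the map ev which
   realises each element of V as a function on Omega; ev is linear and
   injective (as functions on Omega), so V is identified with a linear space
   of functions on Omega with pointwise operations. *)
Record analytic_hilbert_space (R : realType) (Omega : set R[i]^o)
  (V : completeNormedModType R[i]) (ip : V -> V -> R[i])
  (ev : V -> R[i]^o -> R[i]^o) : Prop := {
  ahs_domain : is_domain Omega;
  ahs_zero : Omega 0;
  ahs_inner : is_inner_product ip;
  ahs_add : forall u v z, Omega z -> ev (u + v) z = ev u z + ev v z;
  ahs_scale : forall (a : R[i]) v z, Omega z -> ev (a *: v) z = a * ev v z;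
  ahs_inj : forall u v, (forall z, Omega z -> ev u z = ev v z) -> u = v;
  ahs_analytic : forall v z, Omega z -> derivable (ev v) z 1;
  ahs_eval_bounded : forall z, Omega z ->
      exists M : R[i], forall v, `|ev v z| <= M * `|v|;
  ahs_shift : exists S : V -> V,
      (forall v z, Omega z -> ev (S v) z = z * ev v z) /\
      (exists M : R[i], forall v, `|S v| <= M * `|v|);
  ahs_poly : forall p : {poly R[i]}, exists v, forall z, Omega z -> ev v z = p.[z];
  ahs_dense : forall (v : V) (eps : R[i]), 0 < eps ->
      exists (p : {poly R[i]}) (w : V),
        (forall z, Omega z -> ev w z = p.[z]) /\ `|v - w| < eps
}.

Definition reproducible (R : realType) (Omega : set R[i]^o)
  (V : completeNormedModType R[i]) (ev : V -> R[i]^o -> R[i]^o)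
  (beta : R[i]) (m : nat) : Prop :=
  exists L : V -> R[i],
    [/\ (forall u v, L (u + v) = L u + L v),
        (forall (a : R[i]) v, L (a *: v) = a * L v),
        (exists M : R[i], forall v, `|L v| <= M * `|v|)
      & (forall (p : {poly R[i]}) (v : V),
           (forall z, Omega z -> ev v z = p.[z]) -> L v = (p^`(m)).[beta])].

(* Main.v *)
Require Import Defs.
From HB Require Import structures.
From mathcomp Require Import all_boot all_order all_algebra.
From mathcomp Require Import complex ring.
From mathcomp Require Import all_classical all_reals all_analysis.
Import Order.TTheory GRing.Theory Num.Theory.
Import numFieldNormedType.Exports.
Local Open Scope ring_scope.

Lemma step (R : realType) (Omega : set R[i]^o)
  (V : completeNormedModType R[i]) (ip : V -> V -> R[i])
  (ev : V -> R[i]^o -> R[i]^o)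
  (HH : analytic_hilbert_space Omega ip ev)
  (beta : R[i]) (m : nat) :
  reproducible Omega ev beta m.+1 -> reproducible Omega ev beta m.
Proof.
case=> L [LD LZ [M HM] LP].
have HM' : forall v, `|L v| <= `|M| * `|v|.
  move=> v; have h0 : 0 <= M * `|v| by apply: le_trans (HM v).
  by rewrite -(normr_id v) -normrM ger0_norm.
case: (ahs_shift HH) => S [HS [MS HMS]].
have HMS' : forall v, `|S v| <= `|MS| * `|v|.
  move=> v; have h0 : 0 <= MS * `|v| by apply: le_trans (HMS v).
  by rewrite -(normr_id v) -normrM ger0_norm.
have SD : forall u v, S (u + v) = S u + S v.
  move=> u v; apply: (ahs_inj HH) => z Oz.
  by rewrite HS // !(ahs_add HH) // !HS // mulrDr.
have SZ : forall (a : R[i]) v, S (a *: v) = a *: S v.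
  move=> a v; apply: (ahs_inj HH) => z Oz.
  by rewrite HS // !(ahs_scale HH) // HS // mulrCA.
have m1 : (m.+1%:R : R[i]) != 0 by rewrite pnatr_eq0.
have m1' : (1 + m%:R : R[i]) != 0 by rewrite nat1r pnatr_eq0.
exists (fun v => (L (S v) - beta * L v) / m.+1%:R); split.
- move=> u v; rewrite SD !LD; field; by rewrite nat1r pnatr_eq0.
- move=> a v; rewrite SZ !LZ; field; by rewrite nat1r pnatr_eq0.
- exists ((`|M| * `|MS| + `|beta| * `|M|) / m.+1%:R) => v.
  rewrite normrM normfV normr_nat [X in _ <= X]mulrAC ler_pM2r ?invr_gt0 ?ltr0n //.
  rewrite mulrDl; apply: (le_trans (ler_normB _ _)); apply: lerD.
    apply: (le_trans (HM' _)); rewrite -mulrA ler_wpM2l //.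
  by rewrite normrM -mulrA ler_wpM2l.
- move=> p v Hv.
  have HSv : forall z, Omega z -> ev (S v) z = (p * 'X + 0%:P).[z].
    by move=> z Oz; rewrite HS // Hv // addr0 hornerMX mulrC.
  rewrite (LP _ _ HSv) (LP _ _ Hv) derivnMXaddC hornerD hornerMn hornerMX.
  rewrite -mulr_natr; field; by rewrite nat1r pnatr_eq0.
Qed.

Theorem mainTheorem3 (R : realType) (Omega : set R[i]^o)
  (V : completeNormedModType R[i]) (ip : V -> V -> R[i])
  (ev : V -> R[i]^o -> R[i]^o)
  (HH : analytic_hilbert_space Omega ip ev)
  (beta : R[i]) (m : nat) :
  reproducible Omega ev beta m ->
  forall j : nat, (j <= m)%N -> reproducible Omega ev beta j.
Proof.
elim: m => [|m IH] Hr j Hj.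
  by move: Hj; rewrite leqn0 => /eqP ->.
case: (ltnP j m.+1) => Hjm.
  exact: IH (@step _ _ _ _ _ HH _ _ Hr) j Hjm.
by have -> : j = m.+1 by apply/eqP; rewrite eqn_leq Hj Hjm.
Qed.
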